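(* For all $n,k\in\mathbb Z$, \[ \binom nk_{a,b;q,p}=\binom{n}{n-k}_{b,a;q,p}\prod_{j=1}^kW_{a,b;q,p}(j,n-k) =(-1)^{n-k}\operatorname{sgn}(n-k)\binom{-k-1}{-n-1}_{a/b,1/b;q,p}\prod_{j=1}^{n-k}W_{a,b;q,p}(n+1-j,j)^{-1} =(-1)^k\operatorname{sgn}(k)\binom{k-n-1}{k}_{1/a,b/a;q,p}\prod_{j=1}^kW_{a,b;q,p}(j,-j). \]
   Context: Let $a,b,q,p\in\mathbb C$ with $|p|<1$, generic so that all theta functions below that appear in denominators are nonzero. $\theta(x;p)=\prod_{j\ge0}(1-p^jx)(1-p^{j+1}/x)$ and $\theta(x_1,\dots,x_\ell;p)=\prod_i\theta(x_i;p)$. $\operatorname{sgn}(n)=1$ for $n\ge0$, $-1$ for $n<0$. Product convention: $\prod_{j=l}^m A_j=A_l\cdots A_m$ if $m>l-1$, $=1$ if $m=l-1$, $=A_{l-1}^{-1}\cdots A_{m+1}^{-1}$ if $m<l-1$. Elliptic weights: $w_{a,b;q,p}(s,t)=\frac{\theta(aq^{s+2t},bq^{2s+t-2},aq^{t-s-1}/b;p)}{\theta(aq^{s+2t-2},bq^{2s+t},aq^{t-s+1}/b;p)}\,q$ and $W_{a,b;q,p}(s,t)=\prod_{j=1}^t w_{a,b;q,p}(s,j)=\frac{\theta(aq^{s+2t},bq^{2s},bq^{2s-1},aq^{1-s}/b,aq^{-s}/b;p)}{\theta(aq^s,bq^{2s+t},bq^{2s+t-1},aq^{1+t-s}/b,aq^{t-s}/b;p)}q^t$.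 The elliptic binomial coefficients $\binom nk_{a,b;q,p}$ ($n,k\in\mathbb Z$) are the unique family with $\binom n0_{a,b;q,p}=\binom nn_{a,b;q,p}=1$ for all $n$ and $\binom{n+1}{k}_{a,b;q,p}=\binom nk_{a,b;q,p}+\binom n{k-1}_{a,b;q,p}W_{a,b;q,p}(k,n+1-k)$ whenever $(n+1,k)\ne(0,0)$; in closed form $\binom nk_{a,b;q,p}=\frac{(q^{1+k},aq^{1+k},bq^{1+k},aq^{1-k}/b;q,p)_{n-k}}{(q,aq,bq^{1+2k},aq/b;q,p)_{n-k}}$ with $(x;q,p)_r=\prod_{i=0}^{r-1}\theta(xq^i;p)$ (product convention) and $(x_1,\dots,x_\ell;q,p)_r=\prod_i(x_i;q,p)_r$. The coefficients with other parameter pairs, e.g. $\binom{\cdot}{\cdot}_{b,a;q,p}$, are defined in the same way with $(a,b)$ replaced accordingly. *)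

(* Defs.v *)
From mathcomp Require Import all_boot all_order all_algebra.
From mathcomp Require Import complex.
From mathcomp Require Import all_classical all_reals sequences normedtype.
Import GRing.Theory Num.Theory numFieldNormedType.Exports.

Set Implicit Arguments.
Unset Strict Implicit.
Unset Printing Implicit Defensive.

Local Open Scope ring_scope.

Section EllDefs.
Variable R : realType.
Local Notation C := R[i].

Definition theta_partial (x p : C) (N : nat) : C :=
  \prod_(j < N) ((1 - p ^+ j * x) * (1 - p ^+ j.+1 / x)).

(* theta(x;p) = prod_{j>=0} (1 - p^j x)(1 - p^{j+1}/x), the infinite product
   being the limit of the partial products (limit taken componentwise). *)
Definition theta (x p : C) : C :=
  Complex (limn (fun N => complex.Re (theta_partial x p N)))
          (limn (fun N => complex.Im (theta_partial x p N))).

(* Product convention:  prod_{j=l}^m A_j  =  A_l ... A_m            if m > l-1,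
                                          =  1                       if m = l-1,
                                          =  A_{l-1}^-1 ... A_{m+1}^-1 if m < l-1. *)
Definition zprod (l m : int) (A : int -> C) : C :=
  if (l - 1 <= m)%R then \prod_(i < (absz (m - l + 1)%R)) A (l + Posz (nat_of_ord i))
  else \prod_(i < (absz (l - 1 - m)%R)) (A (m + 1 + Posz (nat_of_ord i)))^-1.

Definition sgn (n : int) : C := if (0 <= n)%R then 1 else -1.

Definition ew (a b q p : C) (s t : int) : C :=
  theta (a * q ^ (s + 2 * t)) p * theta (b * q ^ (2 * s + t - 2)) p
    * theta (a * q ^ (t - s - 1) / b) p
  / (theta (a * q ^ (s + 2 * t - 2)) p * theta (b * q ^ (2 * s + t)) p
     * theta (a * q ^ (t - s + 1) / b) p)
  * q.

Definition eW (a b q p : C) (s t : int) : C := zprod 1 t (fun j => ew a b q p s j).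

Definition is_ebinom (a b q p : C) (B : int -> int -> C) : Prop :=
  (forall n : int, B n 0 = 1) /\
  (forall n : int, B n n = 1) /\
  (forall n k : int, (n + 1, k) <> (0, 0) ->
     B (n + 1) k = B n k + B n (k - 1) * eW a b q p k (n + 1 - k)).

(* Genericity: all theta values that can occur in denominators
   (those of the weights for the four parameter pairs (a,b), (b,a),
   (a/b,1/b), (1/a,b/a), and of the closed form) are nonzero. *)
Definition generic_params (a b q p : C) : Prop :=
  a != 0 /\ b != 0 /\ q != 0 /\
  (forall (m : int) (x : C), x \in [:: a; b; a / b; 1 / a; 1 / b; b / a] ->
     theta (x * q ^ m) p != 0) /\
  (forall m : int, m != 0 -> theta (q ^ m) p != 0).

End EllDefs.
Arguments sgn {R} n.

(* Main.v *)
Require Import Defs.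
From mathcomp Require Import all_boot all_order all_algebra.
From mathcomp Require Import complex.
From mathcomp Require Import all_classical all_reals sequences normedtype.
Import GRing.Theory Num.Theory numFieldNormedType.Exports.
Local Open Scope ring_scope.

From mathcomp Require Import topology exp.
From mathcomp Require Import ring lra zify.
Import Order.TTheory.

Section Analysis.
Local Open Scope complex_scope.
Local Open Scope classical_set_scope.
Variable R : realType.
Local Notation C := R[i].
Local Notation nc := (@Normc.normc R).

Lemma nc_C (z : C) : `|z| = (nc z)%:C.
Proof. by case: z. Qed.

Lemma nc_ge0 (z : C) : 0 <= nc z.
Proof. by case: z => a b; rewrite /Normc.normc sqrtr_ge0. Qed.

Lemma ncD (x y : C) : nc (x + y) <= nc x + nc y.
Proof. by have := ler_normD x y; rewrite !nc_C -rmorphD lecR. Qed.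

Lemma ncN (x : C) : nc (- x) = nc x.
Proof. by have := normrN x; rewrite !nc_C => -[]. Qed.

Lemma ncB (x y : C) : nc (x - y) <= nc x + nc y.
Proof. by rewrite -(ncN y) ncD. Qed.

Lemma nc1 : nc 1 = 1.
Proof. exact: Normc.normc1. Qed.

Lemma ncX (x : C) n : nc (x ^+ n) = nc x ^+ n.
Proof. by elim: n => [|n IH]; rewrite ?expr0 ?nc1 // !exprS Normc.normcM IH. Qed.

Lemma Re_le (z : C) : `|complex.Re z| <= nc z.
Proof.
case: z => a b /=; rewrite -sqrtr_sqr ler_sqrt ?addr_ge0 ?sqr_ge0 //.
by rewrite lerDl sqr_ge0.
Qed.

Lemma Im_le (z : C) : `|complex.Im z| <= nc z.
Proof.
case: z => a b /=; rewrite -sqrtr_sqr ler_sqrt ?addr_ge0 ?sqr_ge0 //.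
by rewrite lerDr sqr_ge0.
Qed.

Lemma ReB (x y : C) : complex.Re (x - y) = complex.Re x - complex.Re y.
Proof. by case: x; case: y. Qed.
Lemma ImB (x y : C) : complex.Im (x - y) = complex.Im x - complex.Im y.
Proof. by case: x; case: y. Qed.
Lemma ReD (x y : C) : complex.Re (x + y) = complex.Re x + complex.Re y.
Proof. by case: x; case: y. Qed.
Lemma ImD (x y : C) : complex.Im (x + y) = complex.Im x + complex.Im y.
Proof. by case: x; case: y. Qed.
Lemma ReM (x y : C) : complex.Re (x * y) = complex.Re x * complex.Re y - complex.Im x * complex.Im y.
Proof. by case: x; case: y. Qed.
Lemma ImM (x y : C) : complex.Im (x * y) = complex.Re x * complex.Im y + complex.Im x * complex.Re y.
Proof. by case: x; case: y. Qed.

Lemma cvg_geom_diff (u : nat -> R) (K r : R) : 0 <= r -> r < 1 ->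
  (forall n, `|u n.+1 - u n| <= K * r ^+ n) -> cvgn u.
Proof.
move=> r0 r1 hu.
have K0 : 0 <= K by have := hu 0%N; rewrite expr0 mulr1; apply: le_trans.
pose d n := `|u n.+1 - u n|.
pose P n := \sum_(k < n) d k.
have S_le n : \sum_(k < n) r ^+ k <= (1 - r)^-1.
  have e : (1 - r) * \sum_(k < n) r ^+ k = 1 - r ^+ n.
    elim: n => [|n IH]; first by rewrite big_ord0 expr0 mulr0 subrr.
    by rewrite big_ord_recr /= mulrDr IH exprS; ring.
  have hr : 0 < 1 - r by rewrite subr_gt0.
  by rewrite -(ler_pM2l hr) mulfV ?gt_eqF // e gerBl exprn_ge0.
have P_le n : P n <= K * (1 - r)^-1.
  apply: (le_trans (y := K * \sum_(k < n) r ^+ k)); last by rewrite ler_wpM2l.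
  by rewrite /P mulr_sumr; apply: ler_sum => k _; exact: hu.
have Pnd : nondecreasing_seq P.
  by apply/nondecreasing_seqP => n; rewrite /P big_ord_recr /= lerDl normr_ge0.
have cP : cvgn P.
  by apply: nondecreasing_is_cvgn => //; exists (K * (1 - r)^-1) => _ [n _ <-].
pose Q n := P n - u n.
have uPQ : u = P - Q by apply/funext => n /=; rewrite /Q opprB addrC subrK.
have dist n : `|u n - u 0%N| <= P n.
  elim: n => [|n IH]; first by rewrite subrr normr0 /P big_ord0.
  rewrite /P big_ord_recr /= -/(P n).
  have -> : u n.+1 - u 0%N = (u n.+1 - u n) + (u n - u 0%N) by ring.
  by rewrite (le_trans (ler_normD _ _)) // addrC lerD.
have cQ : cvgn Q.
  apply: nondecreasing_is_cvgn.
    apply/nondecreasing_seqP => n; rewrite /Q /P big_ord_recr /= -/(P n).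
    rewrite -subr_ge0.
    have -> : P n + d n - u n.+1 - (P n - u n) = d n - (u n.+1 - u n) by ring.
    by rewrite subr_ge0 /d ler_norm.
  exists (K * (1 - r)^-1 + K * (1 - r)^-1 + `|u 0%N|) => _ [n _ <-].
  rewrite /Q -addrA; apply: lerD; first exact: P_le.
  have h1 : - u n <= `|u n - u 0%N| + `|u 0%N|.
    have -> : - u n = - (u n - u 0%N) + (- u 0%N) by ring.
    by apply: lerD; rewrite -normrN ler_norm.
  by apply: (le_trans h1); rewrite lerD2r (le_trans (dist n) (P_le n)).
by rewrite uPQ; apply: is_cvgB.
Qed.


Lemma geom_le (r : R) n : 0 <= r -> r < 1 -> \sum_(k < n) r ^+ k <= (1 - r)^-1.
Proof.
move=> r0 r1.
have e : (1 - r) * \sum_(k < n) r ^+ k = 1 - r ^+ n.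
  elim: n => [|n IH]; first by rewrite big_ord0 expr0 mulr0 subrr.
  by rewrite big_ord_recr /= mulrDr IH exprS; ring.
have hr : 0 < 1 - r by rewrite subr_gt0.
by rewrite -(ler_pM2l hr) mulfV ?gt_eqF // e gerBl exprn_ge0.
Qed.

Section Theta.
Variables (p : C).
Hypothesis hp : nc p < 1.
Local Notation rho := (nc p).
Local Notation tp x N := (theta_partial x p N).
Definition fct (x : C) (j : nat) := (1 - p ^+ j * x) * (1 - p ^+ j.+1 / x).

Lemma tpS x N : tp x N.+1 = tp x N * fct x N.
Proof. by rewrite /theta_partial big_ord_recr. Qed.
Lemma tp0 x : tp x 0 = 1.
Proof. by rewrite /theta_partial big_ord0. Qed.

Lemma rho_ge0 : 0 <= rho.
Proof. exact: nc_ge0. Qed.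
Lemma rhoS n : rho ^+ n.+1 <= rho ^+ n.
Proof. by rewrite exprSr ler_piMr ?exprn_ge0 ?rho_ge0 // ltW. Qed.

Lemma nc_fct x j : nc (fct x j) <= (1 + rho ^+ j * nc x) * (1 + rho ^+ j * nc x^-1).
Proof.
rewrite /fct Normc.normcM; apply: ler_pM; [exact: nc_ge0|exact: nc_ge0| |].
- by apply: (le_trans (ncB _ _)); rewrite nc1 lerD2l Normc.normcM ncX.
- apply: (le_trans (ncB _ _)); rewrite nc1 lerD2l Normc.normcM ncX.
  by rewrite ler_wpM2r ?nc_ge0 ?rhoS.
Qed.

Lemma tp_bound x N : nc (tp x N) <= expR ((nc x + nc x^-1) * \sum_(k < N) rho ^+ k).
Proof.
elim: N => [|N IH]; first by rewrite tp0 nc1 big_ord0 mulr0 expR0.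
rewrite tpS Normc.normcM big_ord_recr /= mulrDr expRD.
apply: ler_pM; [exact: nc_ge0|exact: nc_ge0|exact: IH|].
apply: (le_trans (nc_fct x N)).
have -> : (nc x + nc x^-1) * rho ^+ N = rho ^+ N * nc x + rho ^+ N * nc x^-1 by ring.
rewrite expRD; apply: ler_pM; rewrite ?expR_ge1Dx //.
- by rewrite addr_ge0 ?mulr_ge0 ?exprn_ge0 ?rho_ge0 ?nc_ge0.
- by rewrite addr_ge0 ?mulr_ge0 ?exprn_ge0 ?rho_ge0 ?nc_ge0.
Qed.

Definition Mb x := expR ((nc x + nc x^-1) * (1 - rho)^-1).

Lemma tp_bnd x N : nc (tp x N) <= Mb x.
Proof.
apply: (le_trans (tp_bound x N)); rewrite ler_expR ler_wpM2l ?geom_le ?rho_ge0 //.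
by rewrite addr_ge0 ?nc_ge0.
Qed.

Lemma Mb_ge0 x : 0 <= Mb x.
Proof. exact: expR_ge0. Qed.

Lemma tp_diff x N : nc (tp x N.+1 - tp x N) <=
   Mb x * (nc x + nc x^-1 + nc x * nc x^-1) * rho ^+ N.
Proof.
have -> : tp x N.+1 - tp x N = tp x N * (fct x N - 1) by rewrite tpS; ring.
rewrite Normc.normcM -mulrA; apply: ler_pM; rewrite ?nc_ge0 ?tp_bnd //.
have -> : fct x N - 1 = - (p ^+ N * x) - p ^+ N.+1 / x + (p ^+ N * x) * (p ^+ N.+1 / x).
  by rewrite /fct; ring.
apply: (le_trans (ncD _ _)); rewrite !Normc.normcM !ncX.
apply: (le_trans (lerD (ncB _ _) (lexx _))); rewrite ncN !Normc.normcM !ncX.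
have h1 := rhoS N.
have h2 : rho ^+ N.+1 <= 1 by rewrite exprn_ile1 ?rho_ge0 // ltW.
have X0 := nc_ge0 x; have Y0 := nc_ge0 x^-1; have r0 : 0 <= rho ^+ N by rewrite exprn_ge0 ?rho_ge0.
have r1 : 0 <= rho ^+ N.+1 by rewrite exprn_ge0 ?rho_ge0.
rewrite !mulrDl; apply: lerD; first apply: lerD.
- by rewrite mulrC.
- by rewrite mulrC ler_wpM2l.
- set a := nc p ^+ N; set b := nc p ^+ N.+1; set X := nc x; set Y := nc x^-1.
  have -> : a * X * (b * Y) = (X * Y * a) * b by ring.
  by rewrite ler_piMr // !mulr_ge0.
Qed.

Lemma cvg_Re x : cvgn (fun N => complex.Re (tp x N)).
Proof.
apply: (@cvg_geom_diff _ (Mb x * (nc x + nc x^-1 + nc x * nc x^-1)) rho) => //.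
  exact: rho_ge0.
by move=> n; rewrite -ReB; apply: (le_trans (Re_le _)); apply: tp_diff.
Qed.

Lemma cvg_Im x : cvgn (fun N => complex.Im (tp x N)).
Proof.
apply: (@cvg_geom_diff _ (Mb x * (nc x + nc x^-1 + nc x * nc x^-1)) rho) => //.
  exact: rho_ge0.
by move=> n; rewrite -ImB; apply: (le_trans (Im_le _)); apply: tp_diff.
Qed.


Lemma tp_rel x N : x != 0 ->
  tp x^-1 N * ((1 - x) * (1 - p ^+ N / x)) = tp x N * ((1 - x^-1) * (1 - p ^+ N * x)).
Proof.
move=> hx; elim: N => [|N IH]; first by rewrite !tp0 expr0 !mul1r; ring.
rewrite !tpS /fct invrK.
transitivity (tp x^-1 N * ((1 - x) * (1 - p ^+ N / x)) *
   ((1 - p ^+ N.+1 * x) * (1 - p ^+ N.+1 / x))); first by ring.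
rewrite IH; ring.
Qed.

Lemma tp1 N : tp 1 N.+1 = 0.
Proof. by rewrite /theta_partial big_ord_recl /= expr0 mulr1 subrr !mul0r. Qed.

Lemma tp_rel2 x N : x != 0 ->
  tp x^-1 N.+1 + x^-1 * tp x N.+1 = p ^+ N.+1 * (tp x N.+1 + x^-1 * tp x^-1 N.+1).
Proof.
move=> hx; have [->|x1] := eqVneq x 1; first by rewrite invr1 tp1; ring.
have rel := tp_rel x N.+1 hx.
set t' := tp x^-1 N.+1 in rel *; set t := tp x N.+1 in rel *; set P := p ^+ N.+1 in rel *.
apply: (mulfI (x := 1 - x)); first by rewrite subr_eq0 eq_sym.
apply/eqP; rewrite -subr_eq0; apply/eqP.
transitivity (t' * ((1 - x) * (1 - P / x)) - t * ((1 - x^-1) * (1 - P * x))).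
  by field.
by rewrite rel subrr.
Qed.

Lemma theta_inv x : x != 0 -> theta x^-1 p = - x^-1 * theta x p.
Proof.
move=> hx.
pose e N := p ^+ N * (tp x N + x^-1 * tp x^-1 N).
pose E := Mb x + nc x^-1 * Mb x^-1.
have ebnd N : nc (e N) <= E * rho ^+ N.
  rewrite /e Normc.normcM ncX mulrC ler_wpM2r ?exprn_ge0 ?rho_ge0 //.
  apply: (le_trans (ncD _ _)); rewrite Normc.normcM lerD ?tp_bnd //.
  by rewrite ler_wpM2l ?nc_ge0 ?tp_bnd.
have E0 : 0 <= E by rewrite addr_ge0 ?Mb_ge0 // mulr_ge0 ?nc_ge0 ?Mb_ge0.
have geo : (fun N => E * rho ^+ N) @ \oo --> 0.
  rewrite -(mulr0 E); apply: cvgMl_tmp; apply: cvg_expr.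
  by rewrite ger0_norm ?rho_ge0.
have geoN : (fun N => - (E * rho ^+ N)) @ \oo --> 0.
  by rewrite -oppr0; apply: cvgN.
have eRe : (fun N => complex.Re (e N)) @ \oo --> 0.
  apply: (squeeze_cvgr _ geoN geo); apply: filterE => N.
  have := le_trans (Re_le (e N)) (ebnd N); rewrite ler_norml => /andP[h1 h2].
  by rewrite h1 h2.
have eIm : (fun N => complex.Im (e N)) @ \oo --> 0.
  apply: (squeeze_cvgr _ geoN geo); apply: filterE => N.
  have := le_trans (Im_le (e N)) (ebnd N); rewrite ler_norml => /andP[h1 h2].
  by rewrite h1 h2.
have rel N : tp x^-1 N.+1 = - x^-1 * tp x N.+1 + e N.+1.
  by rewrite /e -tp_rel2 //; ring.
set c := - x^-1.
have cR := cvg_Re x; have cI := cvg_Im x.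
set Lr := limn (fun N => complex.Re (tp x N)) in cR *.
set Li := limn (fun N => complex.Im (tp x N)) in cI *.
have cR' : (fun N => complex.Re (tp x N.+1)) @ \oo --> Lr by rewrite (cvg_shiftS (fun N => complex.Re (tp x N))).
have cI' : (fun N => complex.Im (tp x N.+1)) @ \oo --> Li by rewrite (cvg_shiftS (fun N => complex.Im (tp x N))).
have hRe : (fun N => complex.Re (tp x^-1 N)) @ \oo --> complex.Re c * Lr - complex.Im c * Li + 0.
  rewrite -(cvg_shiftS (fun N => complex.Re (tp x^-1 N))) /=.
  have -> : (fun N => complex.Re (tp x^-1 N.+1)) = (fun N =>
     (complex.Re c * complex.Re (tp x N.+1) - complex.Im c * complex.Im (tp x N.+1)) + complex.Re (e N.+1)).
    by apply/funext => N; rewrite rel ReD ReM.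
  apply: cvgD; last by rewrite (cvg_shiftS (fun N => complex.Re (e N))).
  by apply: cvgB; apply: cvgMl_tmp.
have hIm : (fun N => complex.Im (tp x^-1 N)) @ \oo --> complex.Re c * Li + complex.Im c * Lr + 0.
  rewrite -(cvg_shiftS (fun N => complex.Im (tp x^-1 N))) /=.
  have -> : (fun N => complex.Im (tp x^-1 N.+1)) = (fun N =>
     (complex.Re c * complex.Im (tp x N.+1) + complex.Im c * complex.Re (tp x N.+1)) + complex.Im (e N.+1)).
    by apply/funext => N; rewrite rel ImD ImM.
  apply: cvgD; last by rewrite (cvg_shiftS (fun N => complex.Im (e N))).
  by apply: cvgD; apply: cvgMl_tmp.
rewrite /theta (cvg_lim _ hRe) // (cvg_lim _ hIm) // !addr0 -/Lr -/Li.
clear hRe hIm rel; clearbody c; by case: c.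
Qed.

End Theta.
End Analysis.

Section Infra.
Variable R : realType.
Local Notation C := R[i].

Lemma int_ind2 (P : int -> Prop) : P 0 -> (forall m, P m -> P (m + 1)) ->
  (forall m, P m -> P (m - 1)) -> forall m, P m.
Proof.
move=> P0 Pu Pd [n|n].
  elim: n => [//|n IH]; rewrite -addn1 PoszD; exact: Pu.
elim: n => [|n IH]; first by have -> : Negz 0 = 0 - 1 by []; apply: Pd.
have -> : Negz n.+1 = Negz n - 1 by rewrite !NegzE; lia.
exact: Pd.
Qed.

Lemma rec_uniq (F G c : int -> C) : (forall m, c m != 0) -> F 0 = G 0 ->
  (forall m, F m = F (m - 1) * c m) -> (forall m, G m = G (m - 1) * c m) ->
  forall m, F m = G m.
Proof.
move=> nz e0 hF hG; apply: int_ind2 => // m IH.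
  by rewrite hF hG addrK IH.
apply: (mulIf (nz m)); rewrite -hF -hG; exact: IH.
Qed.

Lemma zprod_pos (A : int -> C) (n : nat) : zprod 1 n A = \prod_(i < n) A (1 + i%:Z).
Proof. by rewrite /zprod subrr lez_nat subrK. Qed.

Lemma zprod_neg (A : int -> C) (n : nat) :
  zprod 1 (- n.+1%:Z) A = \prod_(i < n.+1) (A (- n.+1%:Z + 1 + i%:Z))^-1.
Proof.
rewrite /zprod subrr.
have -> : (0 <= - n.+1%:Z) = false by rewrite oppr_ge0.
by rewrite sub0r opprK.
Qed.

Lemma zprod0 (A : int -> C) : zprod 1 0 A = 1.
Proof. by rewrite (zprod_pos A 0) big_ord0. Qed.

Lemma zprod_rec (A : int -> C) : (forall m, A m != 0) ->
  forall m, zprod 1 m A = zprod 1 (m - 1) A * A m.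
Proof.
move=> nz [[|n]|n].
- rewrite zprod0 sub0r (zprod_neg A 0) big_ord1 /=.
  by rewrite mulVf.
- rewrite zprod_pos big_ord_recr /=.
  have -> : n.+1%:Z - 1 = n by lia.
  by rewrite zprod_pos; congr (_ * A _); lia.
- rewrite NegzE.
  have -> : - n.+1%:Z - 1 = - n.+2%:Z by lia.
  rewrite !zprod_neg [in RHS]big_ord_recl /=.
  have -> : - n.+2%:Z + 1 + 0%:Z = - n.+1%:Z by lia.
  rewrite mulrC mulrA mulfV // mul1r; apply: eq_bigr => i _; congr (A _)^-1.
  rewrite /bump /=; lia.
Qed.

Lemma zprod_mul (A B : int -> C) m :
  zprod 1 m (fun j => A j * B j) = zprod 1 m A * zprod 1 m B.
Proof.
case: m => n; first by rewrite !zprod_pos big_split.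
rewrite NegzE !zprod_neg -big_split /=; apply: eq_bigr => i _; exact: invfM.
Qed.

Lemma zprod_1 m : zprod 1 m (fun _ => 1 : C) = 1.
Proof.
case: m => n; first by rewrite zprod_pos big1.
by rewrite NegzE zprod_neg big1 // => i _; rewrite invr1.
Qed.

Lemma zprod_ext (A B : int -> C) m : (forall j, A j = B j) -> zprod 1 m A = zprod 1 m B.
Proof. by move=> h; rewrite (boolp.funext h). Qed.

Lemma zprod_nz (A : int -> C) m : (forall j, A j != 0) -> zprod 1 m A != 0.
Proof.
move=> nz; case: m => n.
  by rewrite zprod_pos prodf_seq_neq0; apply/allP => i _; rewrite /= nz.
by rewrite NegzE zprod_neg prodf_seq_neq0; apply/allP => i _; rewrite /= invr_eq0 nz.
Qed.

End Infra.

Section Ell.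
Variable R : realType.
Local Notation C := R[i].
Variables (p q : C).
Hypothesis hq : q != 0.
Hypothesis Hinv : forall z : C, z != 0 -> theta z^-1 p = - z^-1 * theta z p.
Local Notation T z := (theta z p).

Definition gen (x y : C) := [/\ x != 0, y != 0, (forall m : int, T (x * q ^ m) != 0),
   (forall m : int, T (y * q ^ m) != 0) & (forall m : int, T (x * q ^ m / y) != 0)].

Lemma qm_nz m : q ^ m != 0.
Proof. exact: expfz_neq0. Qed.

Lemma Tinv z w : z != 0 -> w = z^-1 -> T w = - w * T z.
Proof. by move=> hz ->; exact: Hinv. Qed.

Lemma invC x y m : x != 0 -> y != 0 ->
  T (y * q ^ m / x) = - (y * q ^ m / x) * T (x * q ^ (- m) / y).
Proof.
move=> hx hy; have := qm_nz m => hm; apply: Tinv.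
  by rewrite !mulf_neq0 ?invr_eq0 ?qm_nz.
by rewrite -invr_expz; field; rewrite hx hy hm.
Qed.

Lemma invA' x m : x != 0 -> T (x^-1 * q ^ m) = - (x^-1 * q ^ m) * T (x * q ^ (- m)).
Proof.
move=> hx; have := qm_nz m => hm; apply: Tinv.
  by rewrite !mulf_neq0 ?invr_eq0 ?qm_nz.
by rewrite -invr_expz; field; rewrite hx hm.
Qed.

Lemma invB' x y m : x != 0 -> y != 0 ->
  T (y / x * q ^ m) = - (y / x * q ^ m) * T (x * q ^ (- m) / y).
Proof.
move=> hx hy; have := qm_nz m => hm; apply: Tinv.
  by rewrite !mulf_neq0 ?invr_eq0 ?qm_nz.
by rewrite -invr_expz; field; rewrite hx hy hm.
Qed.

Lemma invC' x y m : x != 0 -> y != 0 ->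
  T (x^-1 * q ^ m / (y / x)) = - (x^-1 * q ^ m / (y / x)) * T (y * q ^ (- m)).
Proof.
move=> hx hy; have := qm_nz m => hm; apply: Tinv.
  by rewrite !mulf_neq0 ?invr_eq0 ?qm_nz.
by rewrite -invr_expz; field; rewrite hx hy hm.
Qed.

Ltac nz := repeat match goal with
 | |- is_true (_ * _ != 0) => apply: mulf_neq0
 | |- is_true (_^-1 != 0) => rewrite invr_eq0
 | |- is_true (- _ != 0) => rewrite oppr_eq0
 | |- is_true (q ^ _ != 0) => apply: qm_nz
 | _ => assumption end.

Ltac closenz x y hA hB hC := repeat (apply/andP; split); repeat match goal with
 | |- is_true (_ * _ != 0) => apply: mulf_neq0
 | |- is_true (_^-1 != 0) => rewrite invr_eq0
 | |- is_true (- _ != 0) => rewrite oppr_eq0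
 | |- is_true (q ^ _ != 0) => apply: qm_nz
 | |- is_true (theta (x * q ^ _ / y) p != 0) => apply: hC
 | |- is_true (theta (x * q ^ _) p != 0) => apply: hA
 | |- is_true (theta (y * q ^ _) p != 0) => apply: hB
 | |- is_true (x != 0) => assumption
 | |- is_true (y != 0) => assumption
 | |- is_true (q != 0) => assumption
 end.

Lemma gen_swap x y : gen x y -> gen y x.
Proof.
case=> hx hy hA hB hC; split => // m.
by rewrite invC //; nz.
Qed.

Lemma gen_3 x y : gen x y -> gen x^-1 (y / x).
Proof.
case=> hx hy hA hB hC; split => [||m|m|m].
- by rewrite invr_eq0.
- by rewrite mulf_neq0 ?invr_eq0.
- by rewrite invA' //; nz.
- by rewrite invB' //; nz.
- by rewrite invC' //; nz.
Qed.

Lemma qstep m : q ^ (m + 1 + 1) = q ^ m * q * q.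
Proof. by rewrite !expfzDr // expr1z. Qed.

Section W.
Variables x y : C.
Hypothesis G : gen x y.

Lemma w_nz s t : ew x y q p s t != 0.
Proof.
case: G => hx hy hA hB hC.
by rewrite /ew; closenz x y hA hB hC.
Qed.

Lemma W_nz s t : eW x y q p s t != 0.
Proof. by apply: zprod_nz => j; exact: w_nz. Qed.

Lemma I1w s i : ew y x q p s i * ew x y q p i s = 1.
Proof.
case: G => hx hy hA hB hC.
rewrite /ew !(invC x y) //.
have e1 : s + 2 * i = 2 * i + s by lia.
have e2 : 2 * s + i = i + 2 * s by lia.
have e3 : - (i - s - 1) = s - i + 1 by lia.
have e4 : - (i - s + 1) = s - i - 1 by lia.
have e5 : q ^ (i - s + 1) = q ^ (i - s - 1) * q * q.
  by rewrite -qstep; congr (_ ^ _); lia.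
rewrite e1 e2 e3 e4 e5.
Time field.
Time by closenz x y hA hB hC.
Qed.

Lemma I3w k t : ew x^-1 (y / x) q p k t * ew x y q p k (1 - t - k) = 1.
Proof.
case: G => hx hy hA hB hC.
rewrite /ew !(invC' x y) // !(invB' x y) // !(invA' x) //.
have eA1 : - (k + 2 * t) = k + 2 * (1 - t - k) - 2 by lia.
have eA2 : - (k + 2 * t - 2) = k + 2 * (1 - t - k) by lia.
have eC1 : - (2 * k + t - 2) = (1 - t - k) - k + 1 by lia.
have eC2 : - (2 * k + t) = (1 - t - k) - k - 1 by lia.
have eB1 : - (t - k - 1) = 2 * k + (1 - t - k) by lia.
have eB2 : - (t - k + 1) = 2 * k + (1 - t - k) - 2 by lia.
have f1 : q ^ (k + 2 * t) = q ^ (k + 2 * t - 2) * q * q.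
  by rewrite -qstep; congr (_ ^ _); lia.
have f2 : q ^ (2 * k + t) = q ^ (2 * k + t - 2) * q * q.
  by rewrite -qstep; congr (_ ^ _); lia.
have f3 : q ^ (t - k + 1) = q ^ (t - k - 1) * q * q.
  by rewrite -qstep; congr (_ ^ _); lia.
rewrite eA1 eA2 eC1 eC2 eB1 eB2 f1 f2 f3.
Time field.
Time by closenz x y hA hB hC.
Qed.

Lemma W0 s : eW x y q p s 0 = 1.
Proof. by rewrite /eW zprod0. Qed.

Lemma W_rec s t : eW x y q p s t = eW x y q p s (t - 1) * ew x y q p s t.
Proof. by rewrite /eW; apply: zprod_rec => j; exact: w_nz. Qed.

Lemma I1W t k : eW y x q p (t + 1) k * zprod 1 k (fun j => eW x y q p j (t + 1)) =
  zprod 1 k (fun j => eW x y q p j t).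
Proof.
have -> : zprod 1 k (fun j => eW x y q p j (t + 1)) =
    zprod 1 k (fun j => eW x y q p j t * ew x y q p j (t + 1)).
  by apply: zprod_ext => j; rewrite W_rec addrK.
rewrite zprod_mul /eW mulrCA -zprod_mul.
rewrite (@zprod_ext _ (fun j => ew y x q p (t + 1) j * ew x y q p j (t + 1)) (fun _ => 1)) ?zprod_1 ?mulr1 // => j.
exact: I1w.
Qed.

End W.
Arguments gen_swap {x y}.
Arguments gen_3 {x y}.
Arguments w_nz {x y}.
Arguments W_nz {x y}.
Arguments I1w {x y}.
Arguments I3w {x y}.
Arguments W0 {x y}.
Arguments W_rec {x y}.
Arguments I1W {x y}.

Lemma I3W x y k m : gen x y ->
  eW x^-1 (y / x) q p k (- m) * eW x y q p k (- k) = eW x y q p k (m - k).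
Proof.
move=> G; have G3 := gen_3 G.
move: m; apply: (@rec_uniq _ _ _ (fun m => ew x y q p k (m - k))).
- by move=> m; exact: w_nz.
- by rewrite oppr0 W0 // mul1r sub0r.
- move=> m.
  rewrite [eW _ _ _ _ k (- (m - 1))](W_rec G3).
  have -> : - (m - 1) - 1 = - m by lia.
  have e := I3w G k (- (m - 1)).
  rewrite (_ : 1 - - (m - 1) - k = m - k) in e; last by lia.
  transitivity (eW x^-1 (y / x) q p k (- m) * eW x y q p k (- k) *
    (ew x^-1 (y / x) q p k (- (m - 1)) * ew x y q p k (m - k))); first by rewrite e mulr1.
  ring.
- move=> m; rewrite (W_rec G); congr (eW _ _ _ _ _ _ * _); lia.
Qed.

Lemma cancel_add (a b : C) : a = a + b -> b = 0.
Proof. by move=> h; rewrite -(addKr a b) -h addNr. Qed.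

Definition sK (k : int) : C := (-1) ^ k * sgn k.

Lemma sK0 : sK 0 = 1.
Proof. by rewrite /sK /sgn expr0z lexx mulr1. Qed.

Lemma sK_rec m : sK m = sK (m - 1) * (if m == 0 then 1 else -1).
Proof.
rewrite /sK -{1}(subrK 1 m) expfzDr ?oppr_eq0 ?oner_eq0 // expr1z.
have [->|m0] := eqVneq m 0.
  rewrite /sgn lexx.
  have -> : (0 <= 0 - 1 :> int) = false by [].
  by rewrite /= !mulrN1 mulr1.
have e : (0 <= m - 1) = (0 <= m) by apply/idP/idP => h; lia.
by rewrite /sgn e /=; ring.
Qed.

Lemma sK_sq k : sK k * sK k = 1.
Proof.
rewrite /sK mulrACA -expfzMl mulrNN mulr1 exp1rz mul1r.
by rewrite /sgn; case: ifP => _; rewrite ?mulr1 ?mulrNN ?mulr1.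
Qed.

Section Binom.
Variables x y : C.
Hypothesis G : gen x y.
Variable B : int -> int -> C.
Hypothesis HB : is_ebinom x y q p B.

Lemma col_m1 n : n != -1 -> B n (-1) = 0.
Proof.
case: HB => B0 [Bd Brec] hn.
have h : ((n + 1, 0) : int * int) <> (0, 0) by case=> e; move/eqP: hn => hn; apply: hn; lia.
have := Brec n 0 h; rewrite !B0 sub0r => /cancel_add /eqP.
by rewrite mulf_eq0 (negbTE (W_nz G _ _)) orbF => /eqP.
Qed.

Lemma vanish_neg (j : nat) n : (0 <= n) || (n < - j.+1%:Z) -> B n (- j.+1%:Z) = 0.
Proof.
case: HB => B0 [Bd Brec].
elim: j n => [|j IH] n hn.
  by apply: col_m1; apply/eqP => e; move: hn; rewrite e.
have h : ((n + 1, - j.+1%:Z) : int * int) <> (0, 0) by case=> _ e; move: e; lia.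
have := Brec n _ h.
rewrite IH; last by move: hn => /orP[h1|h1]; apply/orP; [left|right]; lia.
rewrite IH; last by move: hn => /orP[h1|h1]; apply/orP; [left|right]; lia.
move=> /esym; rewrite add0r => /eqP; rewrite mulf_eq0 (negbTE (W_nz G _ _)) orbF => /eqP.
by have -> : - j.+1%:Z - 1 = - j.+2%:Z by lia.
Qed.

Lemma vanish_up (d m : nat) : B m%:Z (m%:Z + d.+1%:Z) = 0.
Proof.
case: HB => B0 [Bd Brec].
elim: d m => [|d IH] m.
  have h : ((m%:Z + 1, m%:Z + 1) : int * int) <> (0, 0) by case=> e _; move: e; lia.
  have := Brec m _ h; rewrite !Bd.
  have -> : m%:Z + 1 - 1 = m by lia.
  rewrite Bd subrr W0 // mulr1 => e.
  have : B m (m%:Z + 1) = 0 by apply/eqP; rewrite -(addrK 1 (B m _)) -e subrr.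
  by have -> : (m%:Z + 1) = (m%:Z + 0.+1%:Z) by [].
have h : ((m%:Z + 1, m%:Z + d.+2%:Z) : int * int) <> (0, 0) by case=> e _; move: e; lia.
have := Brec m _ h.
have -> : m%:Z + d.+2%:Z - 1 = m%:Z + d.+1%:Z by lia.
rewrite IH mul0r addr0.
have -> : m%:Z + 1 = m.+1%:Z by lia.
have -> : m%:Z + d.+2%:Z = m.+1%:Z + d.+1%:Z by lia.
by rewrite IH.
Qed.

Lemma row0 k : k != 0 -> B 0 k = 0.
Proof.
case: k => [[|n]|n] hk //.
  by have := vanish_up n 0; rewrite add0r.
by rewrite NegzE; apply: vanish_neg; rewrite lexx.
Qed.

Lemma row_m1 k : B (-1) k = sK k * zprod 1 k (fun j => eW x y q p j (- j)).
Proof.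
case: HB => B0 [Bd Brec].
move: k; apply: (@rec_uniq _ _ _ (fun m => if m == 0 then 1 else - eW x y q p m (- m))).
- move=> m; case: ifP => _; first exact: oner_neq0.
  by rewrite oppr_eq0 W_nz.
- by rewrite B0 sK0 zprod0 mulr1.
- move=> m; have [->|m0] := eqVneq m 0.
    by rewrite B0 sub0r Bd mulr1.
  have h : ((-1 + 1, m) : int * int) <> (0, 0) by case=> e; rewrite e eqxx in m0.
  have := Brec (-1) m h.
  have -> : -1 + 1 = 0 :> int by [].
  have -> : 0 - m = - m by rewrite sub0r.
  rewrite row0 // => e.
  by rewrite mulrN; apply/eqP; rewrite -addr_eq0 -e.
- move=> m; rewrite (sK_rec m) (@zprod_rec _ (fun j => eW x y q p j (- j))); last first.
    by move=> j; exact: W_nz.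
  have [->|m0] := eqVneq m 0; last by ring.
  by rewrite oppr0 W0 //; ring.
Qed.

End Binom.

Lemma ebinom_uniq x y B1 B2 : gen x y -> is_ebinom x y q p B1 -> is_ebinom x y q p B2 ->
  forall n k, B1 n k = B2 n k.
Proof.
move=> G [B0 [Bd Brec]] [C0 [Cd Crec]].
pose D n k := B1 n k - B2 n k.
have D0 n : D n 0 = 0 by rewrite /D B0 C0 subrr.
have Dd n : D n n = 0 by rewrite /D Bd Cd subrr.
have Drec n k : (n + 1, k) <> (0, 0) ->
    D (n + 1) k = D n k + D n (k - 1) * eW x y q p k (n + 1 - k).
  by move=> h; rewrite /D Brec // Crec //; ring.
have Wnz := W_nz G.
have pos (j : nat) n : D n j = 0.
  elim: j n => [|j IH] n; first exact: D0.
  have cst : forall m, D m j.+1 = D 0 j.+1.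
    apply: (@rec_uniq _ (fun m => D m j.+1) (fun _ => D 0 j.+1) (fun _ => 1)) => //.
    - by move=> _; exact: oner_neq0.
    - move=> m; rewrite mulr1.
      have h : ((m - 1 + 1, j.+1%:Z) : int * int) <> (0, 0) by case=> _ e; move: e; lia.
      have := Drec (m - 1) j.+1 h; rewrite subrK => ->.
      have -> : j.+1%:Z - 1 = j by lia.
      by rewrite IH mul0r addr0.
    - by move=> m; rewrite mulr1.
  by rewrite cst -(cst j.+1) Dd.
have neg (j : nat) n : D n (- j.+1%:Z) = 0.
  elim: j n => [|j IH] n.
    have [->|hn] := eqVneq n (-1); first exact: Dd.
    have h : ((n + 1, 0) : int * int) <> (0, 0) by case=> e; move/eqP: hn => hn; apply: hn; lia.
    have := Drec n 0 h; rewrite !D0 sub0r => /cancel_add /eqP.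
    by rewrite mulf_eq0 (negbTE (Wnz _ _)) orbF => /eqP.
  have h : ((n + 1, - j.+1%:Z) : int * int) <> (0, 0) by case=> _ e; move: e; lia.
  have := Drec n _ h; rewrite !IH add0r => /esym /eqP.
  rewrite mulf_eq0 (negbTE (Wnz _ _)) orbF => /eqP.
  by have -> : - j.+1%:Z - 1 = - j.+2%:Z by lia.
move=> n k; apply/eqP; rewrite -subr_eq0; apply/eqP; case: k => j.
  exact: pos.
by rewrite NegzE; exact: neg.
Qed.

Lemma L1 x y B : gen x y -> is_ebinom y x q p B ->
  is_ebinom x y q p (fun n k => B n (n - k) * zprod 1 k (fun j => eW x y q p j (n - k))).
Proof.
move=> G [B0 [Bd Brec]]; split; [|split].
- by move=> n; rewrite subr0 Bd zprod0 mulr1.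
- move=> n; rewrite subrr B0 mul1r.
  by rewrite (@zprod_ext _ _ (fun _ => 1)) ?zprod_1 // => j; exact: W0.
- move=> n k hnk /=.
  have e1 : n + 1 - k = (n - k) + 1 by lia.
  have e2 : n - (k - 1) = (n - k) + 1 by lia.
  have h' : ((n + 1, n + 1 - k) : int * int) <> (0, 0).
    by case=> a b; apply: hnk; congr pair => //; lia.
  have := Brec n (n + 1 - k) h'.
  rewrite (_ : n + 1 - k - 1 = n - k); last by lia.
  rewrite (_ : n + 1 - (n + 1 - k) = k); last by lia.
  move=> ->.
  rewrite e2 e1 -(I1W G (n - k) k).
  rewrite (@zprod_rec _ (fun j => eW x y q p j (n - k + 1)) (fun j => W_nz G j _) k).
  ring.
Qed.

Lemma L3 x y B : gen x y -> is_ebinom x^-1 (y / x) q p B ->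
  is_ebinom x y q p (fun n k => (-1) ^ k * sgn k * B (k - n - 1) k *
                                zprod 1 k (fun j => eW x y q p j (- j))).
Proof.
move=> G HB; have G3 := gen_3 G.
have HB' := HB; case: HB => B0 [Bd Brec]; split; [|split].
- by move=> n; rewrite B0 zprod0 -[(-1) ^ 0 * sgn 0]/(sK 0) sK0 !mulr1.
- move=> n; rewrite subrr sub0r (row_m1 _ _ G3 _ HB' n) -[(-1) ^ n * sgn n]/(sK n).
  rewrite mulrA sK_sq mul1r -zprod_mul (@zprod_ext _ _ (fun _ => 1)) ?zprod_1 // => j.
  by rewrite (I3W x y j j G) subrr W0.
- move=> n k hnk /=.
  rewrite -[(-1) ^ k * sgn k]/(sK k) -[(-1) ^ (k - 1) * sgn (k - 1)]/(sK (k - 1)).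
  have [k0|k0] := eqVneq k 0.
    subst k; rewrite !B0 sub0r.
    have hn : - 1 - n - 1 != -1.
      by apply/eqP => e; apply: hnk; rewrite (_ : n + 1 = 0) //; lia.
    by rewrite (col_m1 _ _ G3 _ HB' _ hn) mulr0 !mul0r addr0.
  have h' : ((k - n - 2 + 1, k) : int * int) <> (0, 0).
    by case=> _ e; rewrite e eqxx in k0.
  have := Brec (k - n - 2) k h'.
  rewrite (_ : k - n - 2 + 1 - k = - (n + 1)); last by lia.
  rewrite (_ : k - n - 2 + 1 = k - n - 1); last by lia.
  move=> ->.
  rewrite (_ : k - (n + 1) - 1 = k - n - 2); last by lia.
  rewrite (_ : k - 1 - n - 1 = k - n - 2); last by lia.
  rewrite (sK_rec k) (negbTE k0).
  rewrite (@zprod_rec _ (fun j => eW x y q p j (- j)) (fun j => W_nz G j _) k).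
  rewrite -(I3W x y k (n + 1) G).
  ring.
Qed.

Lemma sgn_pos (z : int) : 0 <= z -> sgn z = 1 :> C.
Proof. by rewrite /sgn => ->. Qed.

Lemma sgn_neg (z : int) : z < 0 -> sgn z = -1 :> C.
Proof. by rewrite /sgn => h; rewrite leNgt h. Qed.

Lemma m1pow (k n : int) : (-1) ^ k * (-1) ^ n = (-1) ^ (n - k) :> C.
Proof.
have e : (-1) ^ n = (-1) ^ (n - k) * (-1) ^ k :> C.
  by rewrite -expfzDr ?subrK // oppr_eq0 oner_eq0.
rewrite e; transitivity ((-1) ^ (n - k) * ((-1) ^ k * (-1) ^ k) : C); first by ring.
by rewrite -expfzMl mulrNN mulr1 exp1rz mulr1.
Qed.

Lemma main_sec a b Bab Bba B3 B4 : gen a b -> is_ebinom a b q p Bab -> is_ebinom b a q p Bba ->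
  is_ebinom (a / b) b^-1 q p B3 -> is_ebinom a^-1 (b / a) q p B4 ->
  forall n k : int,
    Bab n k = Bba n (n - k) * zprod 1 k (fun j => eW a b q p j (n - k)) /\
    Bab n k = (-1) ^ (n - k) * sgn (n - k) * B3 (- k - 1) (- n - 1)
                * zprod 1 (n - k) (fun j => (eW a b q p (n + 1 - j) j)^-1) /\
    Bab n k = (-1) ^ k * sgn k * B4 (k - n - 1) k
                * zprod 1 k (fun j => eW a b q p j (- j)).
Proof.
move=> G hab hba h3 h4 n k.
have [ha hb _ _ _] := G.
split; first exact: (ebinom_uniq _ _ _ _ G hab (L1 _ _ _ G hba)).
split; last exact: (ebinom_uniq _ _ _ _ G hab (L3 _ _ _ G h4)).
have Gx : gen (b / a) a^-1 := gen_swap (gen_3 G).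
have h3' : is_ebinom (b / a)^-1 (a^-1 / (b / a)) q p B3.
  have -> : a^-1 / (b / a) = b^-1 by field; rewrite ha hb.
  have -> : (b / a)^-1 = a / b by rewrite invf_div.
  exact: h3.
have HA := L3 _ _ _ Gx h3'.
have HB4 := L1 _ _ _ (gen_3 G) HA.
have HC := L3 _ _ _ G HB4.
have E := ebinom_uniq _ _ _ _ G hab HC.
have [_ [Babd _]] := hab.
have [_ [B3d _]] := h3.
pose Qx := fun K => zprod 1 K (fun j => eW (b / a) a^-1 q p j (- j)).
pose Pk := fun k => zprod 1 k (fun j => eW a b q p j (n + 1 - j)).
have hF : forall k, Bab n k = sK k * sK (- n - 1) * B3 (- k - 1) (- n - 1) * Qx (- n - 1) * Pk k.
  move=> k'; rewrite E /=.
  rewrite (_ : k' - n - 1 - k' = - n - 1); last by lia.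
  rewrite (_ : - n - 1 - (k' - n - 1) - 1 = - k' - 1); last by lia.
  rewrite -[(-1) ^ k' * sgn k']/(sK k') -[(-1) ^ (- n - 1) * sgn (- n - 1)]/(sK (- n - 1)).
  have -> : Pk k' = zprod 1 k' (fun j => eW a^-1 (b / a) q p j (- n - 1)) *
                    zprod 1 k' (fun j => eW a b q p j (- j)).
    rewrite -zprod_mul; apply: zprod_ext => j.
    rewrite (_ : - n - 1 = - (n + 1)); last by lia.
    by rewrite (I3W a b j (n + 1) G).
  rewrite /Qx; ring.
have hD : sK n * sK (- n - 1) * Qx (- n - 1) * Pk n = 1.
  have e := hF n; rewrite Babd B3d mulr1 in e.
  exact: esym e.
have Ainv : forall j, (eW a b q p (n + 1 - j) j)^-1 != 0.
  by move=> j; rewrite invr_eq0 (W_nz G).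
have hY : forall u : int, zprod 1 u (fun j => (eW a b q p (n + 1 - j) j)^-1) * Pk n = Pk (n - u).
  apply: (@rec_uniq _ (fun u => zprod 1 u (fun j => (eW a b q p (n + 1 - j) j)^-1) * Pk n)
           (fun u => Pk (n - u)) (fun j => (eW a b q p (n + 1 - j) j)^-1)) => //.
  - by rewrite zprod0 mul1r subr0.
  - move=> u /=.
    rewrite (@zprod_rec _ (fun j => (eW a b q p (n + 1 - j) j)^-1) Ainv u) /=.
    ring.
  - move=> u /=.
    rewrite /Pk (_ : n - (u - 1) = (n - u) + 1); last by lia.
    rewrite [X in _ = X * _](@zprod_rec _ (fun j => eW a b q p j (n + 1 - j)) (fun j => W_nz G _ _) (n - u + 1)) /=.
    rewrite (_ : n - u + 1 - 1 = n - u); last by lia.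
    rewrite (_ : n + 1 - (n - u + 1) = u); last by lia.
    rewrite (_ : n - u + 1 = n + 1 - u); last by lia.
    by rewrite mulfK // (W_nz G).
have hPk : Pk k = zprod 1 (n - k) (fun j => (eW a b q p (n + 1 - j) j)^-1) * Pk n.
  by rewrite hY (_ : n - (n - k) = k) //; lia.
rewrite (hF k) hPk.
set Y := zprod 1 (n - k) _.
set X := B3 (- k - 1) (- n - 1).
have hR : sK (- n - 1) * Qx (- n - 1) * Pk n = sK n.
  transitivity (sK n * (sK n * sK (- n - 1) * Qx (- n - 1) * Pk n)); last by rewrite hD mulr1.
  transitivity ((sK n * sK n) * (sK (- n - 1) * Qx (- n - 1) * Pk n)); first by rewrite sK_sq mul1r.
  ring.
transitivity (sK k * (sK (- n - 1) * Qx (- n - 1) * Pk n) * X * Y); first by ring.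
rewrite hR /sK.
transitivity ((-1) ^ k * (-1) ^ n * (sgn k * sgn n * X) * Y); first by ring.
rewrite m1pow.
suff -> : sgn k * sgn n * X = sgn (n - k) * X by ring.
have Gv : gen (a / b) b^-1 := gen_swap (gen_3 (gen_swap G)).
have [hn|hn] := lerP 0 n.
  have [n' en] : exists n' : nat, n = n'%:Z by exists (absz n); lia.
  have eX : X = B3 (- k - 1) (- n'.+1%:Z) by rewrite /X en; congr B3; lia.
  have [hk|hk] := lerP 0 k.
    have [hkn|hkn] := lerP k n.
      by rewrite !sgn_pos ?mulr1 // subr_ge0.
    rewrite eX (vanish_neg _ _ Gv _ h3) ?mulr0 //.
    by apply/orP; right; lia.
  rewrite eX (vanish_neg _ _ Gv _ h3) ?mulr0 //.
  by apply/orP; left; lia.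
have [hk|hk] := lerP 0 k.
  rewrite (sgn_pos _ hk) (sgn_neg _ hn) sgn_neg; first by ring.
  lia.
have [hkn|hkn] := lerP k n.
  rewrite (sgn_neg _ hk) (sgn_neg _ hn) sgn_pos; first by ring.
  lia.
have [K' eK] : exists K' : nat, - k - 1 = K'%:Z by exists (absz (- k - 1)); lia.
have [d ed] : exists d : nat, - n - 1 = K'%:Z + d.+1%:Z.
  by exists (absz (- n - 1 - K'%:Z - 1)%R); lia.
by rewrite /X eK ed (vanish_up _ _ _ h3) !mulr0.
Qed.

End Ell.

Theorem corollary3 (R : realType) (a b q p : R[i])
  (hp : `|p| < 1) (hgen : generic_params a b q p)
  (Bab Bba B3 B4 : int -> int -> R[i])
  (hab : is_ebinom a b q p Bab)
  (hba : is_ebinom b a q p Bba)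
  (h3 : is_ebinom (a / b) (1 / b) q p B3)
  (h4 : is_ebinom (1 / a) (b / a) q p B4) :
  forall n k : int,
    Bab n k = Bba n (n - k) * zprod 1 k (fun j => eW a b q p j (n - k)) /\
    Bab n k = (-1) ^ (n - k) * sgn (n - k) * B3 (- k - 1) (- n - 1)
                * zprod 1 (n - k) (fun j => (eW a b q p (n + 1 - j) j)^-1) /\
    Bab n k = (-1) ^ k * sgn k * B4 (k - n - 1) k
                * zprod 1 k (fun j => eW a b q p j (- j)).
Proof.
move=> n k.
case: hgen => ha [hb [hq [hl hq0]]].
have hp' : Normc.normc p < 1.
  by move: hp; rewrite nc_C ltcE /= => /andP[].
have Hinv : forall z : R[i], z != 0 -> theta z^-1 p = - z^-1 * theta z p.
  by move=> z hz; exact: (@theta_inv R p hp' z hz).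
have G : @gen R p q a b.
  split => // m.
  - by apply: hl; rewrite inE eqxx.
  - by apply: hl; rewrite !inE eqxx !orbT.
  - by rewrite mulrAC; apply: hl; rewrite !inE eqxx !orbT.
rewrite div1r in h3; rewrite div1r in h4.
exact: (@main_sec R p q hq Hinv a b Bab Bba B3 B4 G hab hba h3 h4 n k).
Qed.
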